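(* Under the Standing Setup (see context), let $\{x^k\}$ be generated by Algorithm 1 and let $x^*$ be its limit, with $f(x^* )=\inf_{x\in B[\bar x,\beta]}f(x)$. Given $\epsilon>0$ and an integer $T$, suppose that $$\|x^{k+1}-x^k\|>\epsilon\quad\text{for } k=0,\dots,T.$$ Then $$T<2+\frac{2}{\rho}\bigl(f(x^0)-f(x^* )\bigr)\epsilon^{-2}.$$
   Context: $B(x,r)$, $B[x,r]$: open and closed Euclidean balls. For $\mu>0$: $e_\mu f(x):=\min_y\{f(y)+\frac{1}{2\mu}\|y-x\|^2\}$ (Moreau envelope), $P_\mu f(x):=\operatorname{argmin}_y\{f(y)+\frac{1}{2\mu}\|y-x\|^2\}$ (proximal operator). $\partial f$: limiting subdifferential. $f$ is $\rho$-weakly convex on $U$ if $f(\alpha x+(1-\alpha)y)\le \alpha f(x)+(1-\alpha)f(y)+\frac{\rho\alpha(1-\alpha)}{2}\|x-y\|^2$ for all $x,y\in U$, $\alpha\in[0,1]$. Standing Fact (cited): if $f$ is $\rho$-weakly convex on $\mathbb{R}^n$, $\rho>0$, $0\in\partial f(\bar x)$ and $\mu\in(0,1/\rho)$, there is $\alpha>0$ such that on $B[\bar x,\alpha]$, $P_\mu f$ is single-valued, $1/(1-\mu\rho)$-Lipschitz, equal to $(I+\mu\partial f)^{-1}$, and $e_\mu f$ is $C^1$ with $\nabla e_\mu f(x)=\mu^{-1}(x-P_\mu f(x))$. Standing Setup: $f:\mathbb{R}^n\to\mathbb{R}\cup\{+\infty\}$ is proper, lower semicontinuous, bounded below and $\rho$-weakly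 convex on $\mathbb{R}^n$, $\rho>0$; $\bar x\in\operatorname{dom}f$ with $0\in\partial f(\bar x)$. Fix $\bar\lambda>0$ and bounded sequences $\{\gamma_k\},\{\lambda_k\}$ with $0<\bar\lambda<2\gamma_k<\lambda_k<1/\rho$ for all $k$. Let $\delta>0$ be such that, for every $k$, the Standing Fact holds on $B[\bar x,\delta]$ for $\mu=\gamma_k$ and $\mu=\lambda_k$, and (Assumption 1) the Moreau envelopes $e_{\gamma_k}f$ and $e_{\lambda_k}f$ are convex on $B[\bar x,\delta]$. For each $k$ let $L_k:=1+\frac{\lambda_k-\gamma_k}{\gamma_k}\bigl(1+\frac{1}{1-\gamma_k\rho}\bigr)$, pick $\sigma_k\in(0,2/L_k^2)$, set $\kappa_k:=1-2\sigma_k+\sigma_k^2L_k^2$, and let $\beta>0$ satisfy $\beta<\min\{\delta,\frac{\delta}{\sigma_k}(1-\sqrt{\kappa_k})\}$ for all $k$. Algorithm 1: choose $x^0\in B[\bar x,\beta]$. Given $x^k\in B[\bar x,\beta]$: (a) compute $z^k\in B(\bar x,\delta)$ with $z^k=x^k-(\lambda_k-\gamma_k)\nabla e_{\gamma_k}f(z^k)$; (b) set $x^{k+1}=z^k-\gamma_k(\lambda_k-\gamma_k)^{-1}(x^k-z^k)$. *)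

(* Defs.v *)
(* R^n is 'rV[R]_n with the EUCLIDEAN
   norm defined below (MathComp's built-in norm on 'rV is the max norm). *)
From HB Require Import structures.
From mathcomp Require Import all_boot all_order all_algebra.
From mathcomp Require Import all_classical all_reals.
From mathcomp Require Import ereal.
Set Implicit Arguments. Unset Strict Implicit. Unset Printing Implicit Defensive.
Import Order.TTheory GRing.Theory Num.Theory.
Local Open Scope ring_scope.
Local Open Scope classical_set_scope.

Section Defs.
Variables (R : realType) (n : nat).
Local Notation V := 'rV[R]_n.

Definition dotv (u v : V) : R := \sum_(i < n) u ord0 i * v ord0 i.
Definition enorm (u : V) : R := Num.sqrt (dotv u u).

Definition oball (x : V) (r : R) : set V := [set y | enorm (y - x) < r].
Definition cball (x : V) (r : R) : set V := [set y | enorm (y - x) <= r].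

Definition vcvg (u : nat -> V) (l : V) : Prop :=
  forall e : R, 0 < e -> exists N : nat, forall k, (N <= k)%N -> enorm (u k - l) < e.
Definition rcvg (u : nat -> R) (l : R) : Prop :=
  forall e : R, 0 < e -> exists N : nat, forall k, (N <= k)%N -> `|u k - l| < e.

Definition proper_fun (f : V -> \bar R) : Prop :=
  (exists x, f x < +oo)%E /\ (forall x, f x != -oo%E).
Definition lsc (f : V -> \bar R) : Prop :=
  forall x (a : R), (a%:E < f x)%E ->
    exists d : R, 0 < d /\ forall y, enorm (y - x) < d -> (a%:E < f y)%E.
Definition bounded_below (f : V -> \bar R) : Prop :=
  exists m : R, forall x, (m%:E <= f x)%E.
Definition dom (f : V -> \bar R) : set V := [set x | f x \is a fin_num].

Definition weakly_convex_on (rho : R) (U : set V) (f : V -> \bar R) : Prop :=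
  forall x y (a : R), U x -> U y -> 0 <= a <= 1 ->
    (f ((a *: x + (1 - a) *: y)%R) <=
      a%:E * f x + (1 - a)%:E * f y
      + (rho * a * (1 - a) / 2 * enorm (x - y) ^+ 2)%:E)%E.

Definition convex_on (U : set V) (g : V -> \bar R) : Prop :=
  forall x y (a : R), U x -> U y -> 0 <= a <= 1 ->
    (g ((a *: x + (1 - a) *: y)%R) <= a%:E * g x + (1 - a)%:E * g y)%E.

(* Frechet (regular) subdifferential:
   v in d^f(x) iff f(x) finite and liminf_{y->x} (f y - f x - <v,y-x>)/|y-x| >= 0 *)
Definition frechet_subdiff (f : V -> \bar R) (x v : V) : Prop :=
  f x \is a fin_num /\
  forall e : R, 0 < e -> exists d : R, 0 < d /\
    forall y, enorm (y - x) < d ->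
      (((fine (f x) + dotv v (y - x) - e * enorm (y - x))%R)%:E <= f y)%E.

Definition limiting_subdiff (f : V -> \bar R) (x v : V) : Prop :=
  f x \is a fin_num /\
  exists (xs vs : nat -> V),
    vcvg xs x /\ rcvg (fun k => fine (f (xs k))) (fine (f x)) /\
    (forall k, frechet_subdiff f (xs k) (vs k)) /\ vcvg vs v.

Definition moreau (f : V -> \bar R) (mu : R) (x : V) : \bar R :=
  ereal_inf [set (f y + (enorm (y - x) ^+ 2 / (2 * mu))%:E)%E | y in [set: V]].

Definition prox (f : V -> \bar R) (mu : R) (x : V) : set V :=
  [set p | (f p + (enorm (p - x) ^+ 2 / (2 * mu))%:E)%E = moreau f mu x
           /\ (forall y, (f p + (enorm (p - x) ^+ 2 / (2 * mu))%:E <=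
                          f y + (enorm (y - x) ^+ 2 / (2 * mu))%:E)%E)].

Definition resolvent (f : V -> \bar R) (mu : R) (x : V) : set V :=
  [set q | exists v, limiting_subdiff f q v /\ x = q + mu *: v].

Definition has_grad (g : V -> R) (x G : V) : Prop :=
  forall e : R, 0 < e -> exists d : R, 0 < d /\
    forall y, enorm (y - x) < d ->
      `|g y - g x - dotv G (y - x)| <= e * enorm (y - x).

Definition C1_on_with_grad (U : set V) (g : V -> R) (G : V -> V) : Prop :=
  (forall x, U x -> has_grad g x (G x)) /\
  (forall x, U x -> forall e : R, 0 < e -> exists d : R, 0 < d /\
     forall y, U y -> enorm (y - x) < d -> enorm (G y - G x) < e).

(* Conclusion of the Standing Fact for parameter mu on the ball B[c, a]:
   P_mu f is single-valued (given by P), (1/(1 - mu rho))-Lipschitz,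
   equal to (I + mu df)^{-1}, and e_mu f is C^1 (finite) with
   grad e_mu f (x) = mu^{-1} (x - P_mu f (x)). *)
Definition standing_fact_on (f : V -> \bar R) (rho mu : R) (c : V) (a : R) : Prop :=
  exists P : V -> V,
    (forall x, cball c a x -> prox f mu x = [set P x]) /\
    (forall x y, cball c a x -> cball c a y ->
       enorm (P x - P y) <= (1 - mu * rho)^-1 * enorm (x - y)) /\
    (forall x, cball c a x -> prox f mu x = resolvent f mu x) /\
    (forall x, cball c a x -> moreau f mu x \is a fin_num) /\
    C1_on_with_grad (cball c a) (fun x => fine (moreau f mu x))
                    (fun x => mu^-1 *: (x - P x)).

End Defs.

(* Main.v *)
Require Import Defs.
From HB Require Import structures.
From mathcomp Require Import all_boot all_order all_algebra.
From mathcomp Require Import all_classical all_reals.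
From mathcomp Require Import ereal.
From mathcomp Require Import ring lra.
Import Order.TTheory GRing.Theory Num.Theory.
Local Open Scope ring_scope.
Local Open Scope classical_set_scope.

Section H.
Variables (R : realType) (n : nat).
Local Notation V := 'rV[R]_n.

Lemma dotvBl (a b w : V) : dotv a w - dotv b w = dotv (a - b) w.
Proof. rewrite /dotv -sumrB; apply: eq_bigr => i _; rewrite !mxE; ring. Qed.

Lemma dotvZr (a w : V) (s : R) : dotv a (s *: w) = s * dotv a w.
Proof. rewrite /dotv mulr_sumr; apply: eq_bigr => i _; rewrite !mxE; ring. Qed.

Lemma dotvv_ge0 (a : V) : 0 <= dotv a a.
Proof. apply: sumr_ge0 => i _; rewrite -expr2; exact: sqr_ge0. Qed.

Lemma dotvZZ (a : V) (s : R) : dotv (s *: a) (s *: a) = s ^+ 2 * dotv a a.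
Proof. rewrite /dotv mulr_sumr; apply: eq_bigr => i _; rewrite !mxE; ring. Qed.

Lemma enormZ (a : V) (s : R) : 0 <= s -> enorm (s *: a) = s * enorm a.
Proof.
move=> s0; rewrite /enorm dotvZZ sqrtrM ?sqr_ge0 // sqrtr_sqr ger0_norm //.
Qed.

Lemma enorm0 : enorm (0 : V) = 0.
Proof. by rewrite /enorm /dotv big1 ?sqrtr0 // => i _; rewrite mxE mul0r. Qed.

Lemma enorm_ge0 (a : V) : 0 <= enorm a.
Proof. exact: sqrtr_ge0. Qed.

Lemma dotv0 (a : V) : dotv a a = 0 -> a = 0.
Proof.
move=> h; apply/matrixP => i j; rewrite (ord1 i) mxE.
have H0 : forall k : 'I_n, true -> 0 <= a ord0 k * a ord0 k.
  by move=> k _; rewrite -expr2 sqr_ge0.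
have := @psumr_eq0P _ _ _ _ H0 h j isT.
by move/eqP; rewrite mulf_eq0 orbb; move/eqP.
Qed.

Lemma grad_unique (g : V -> R) z G1 G2 :
  has_grad g z G1 -> has_grad g z G2 -> G1 = G2.
Proof.
move=> h1 h2; apply/eqP; rewrite -subr_eq0; apply/eqP; apply: dotv0.
set u := G1 - G2; set D := dotv u u.
have D0 : 0 <= D by exact: dotvv_ge0.
have key : forall e, 0 < e -> D <= 2 * e * Num.sqrt D.
  move=> e e0.
  have [d1 [d10 H1]] := h1 e e0; have [d2 [d20 H2]] := h2 e e0.
  set d := Num.min d1 d2.
  have d0 : 0 < d by rewrite lt_min d10 d20.
  have nu0 : 0 <= enorm u by exact: enorm_ge0.
  set s := d / (enorm u + 1).
  have s0 : 0 < s by rewrite divr_gt0 // ltr_wpDl.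
  have hy : enorm ((z + s *: u) - z) < d.
    rewrite addrC addKr (enormZ _ _ (ltW s0)) // /s mulrAC ltr_pdivrMr ?ltr_wpDl //.
    by rewrite ltr_pM2l // ltrDl.
  have hy1 : enorm ((z + s *: u) - z) < d1 by apply: lt_le_trans hy _; rewrite ge_min lexx.
  have hy2 : enorm ((z + s *: u) - z) < d2 by apply: lt_le_trans hy _; rewrite ge_min lexx orbT.
  have A1 := H1 _ hy1; have A2 := H2 _ hy2.
  have Ez : z + s *: u - z = s *: u by rewrite addrAC subrr add0r.
  move: A1 A2; rewrite Ez (enormZ _ _ (ltW s0)) //.
  set gg := g (z + s *: u) - g z.
  move=> A1 A2.
  have : `|dotv G1 (s *: u) - dotv G2 (s *: u)| <= 2 * e * (s * enorm u).
    have -> : dotv G1 (s *: u) - dotv G2 (s *: u) =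
      (gg - dotv G2 (s *: u)) - (gg - dotv G1 (s *: u)) by ring.
    apply: le_trans (ler_normB _ _) _; lra.
  rewrite dotvBl dotvZr -/u -/D ger0_norm; last by rewrite mulr_ge0 // ltW.
  have -> : 2 * e * (s * enorm u) = s * (2 * e * enorm u) by ring.
  by rewrite ler_pM2l // /enorm.
have [D00|Dp] := eqVneq D 0; first by [].
have Dpos : 0 < D by rewrite lt_neqAle eq_sym Dp D0.
have sD : 0 < Num.sqrt D by rewrite sqrtr_gt0.
have := key (Num.sqrt D / 4) (divr_gt0 sD (ltr0Sn _ 3)).
rewrite -{1}(sqr_sqrtr D0).
move=> h; exfalso; move: h; rewrite expr2.
have : 0 < Num.sqrt D * Num.sqrt D by rewrite mulr_gt0.
move=> hp h. nra.
Qed.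
End H.
Arguments grad_unique {R n g z G1 G2}.
Arguments enormZ {R n}.
Arguments enorm0 {R n}.
Arguments enorm_ge0 {R n}.

Theorem theorem4p7 (R : realType) (n : nat)
  (f : 'rV[R]_n -> \bar R) (rho : R) (xbar : 'rV[R]_n)
  (lambar : R) (gam lam : nat -> R) (delta : R) (sigma : nat -> R) (beta : R)
  (x z : nat -> 'rV[R]_n) (xstar : 'rV[R]_n) (eps : R) (T : nat) :
  (* Standing Setup: f *)
  proper_fun f -> lsc f -> bounded_below f -> 0 < rho ->
  weakly_convex_on rho [set: 'rV[R]_n] f ->
  dom f xbar -> limiting_subdiff f xbar 0 ->
  (* step sizes *)
  0 < lambar ->
  (exists M : R, forall k, `|gam k| <= M /\ `|lam k| <= M) ->
  (forall k, lambar < 2 * gam k /\ 2 * gam k < lam k /\ lam k < rho^-1) ->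
  (* delta: Standing Fact and Assumption 1 on B[xbar, delta] *)
  0 < delta ->
  (forall k, standing_fact_on f rho (gam k) xbar delta /\
             standing_fact_on f rho (lam k) xbar delta) ->
  (forall k, convex_on (cball xbar delta) (moreau f (gam k)) /\
             convex_on (cball xbar delta) (moreau f (lam k))) ->
  (* sigma_k, kappa_k, beta *)
  (let L k := 1 + (lam k - gam k) / gam k * (1 + (1 - gam k * rho)^-1) in
   let kappa k := 1 - 2 * sigma k + sigma k ^+ 2 * L k ^+ 2 in
   (forall k, 0 < sigma k /\ sigma k < 2 / L k ^+ 2) /\
   0 < beta /\
   (forall k, beta < Num.min delta (delta / sigma k * (1 - Num.sqrt (kappa k))))) ->
  (* Algorithm 1 *)
  cball xbar beta (x 0%N) ->
  (forall k, cball xbar beta (x k)) ->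
  (forall k, oball xbar delta (z k) /\
     has_grad (fun y => fine (moreau f (gam k) y)) (z k)
              ((lam k - gam k)^-1 *: (x k - z k))) ->
  (forall k, x k.+1 = z k - (gam k / (lam k - gam k)) *: (x k - z k)) ->
  (* limit *)
  vcvg x xstar ->
  f xstar = ereal_inf [set f y | y in cball xbar beta] ->
  (* hypothesis of the theorem *)
  0 < eps ->
  (forall k, (k <= T)%N -> eps < enorm (x k.+1 - x k)) ->
  ((T%:R)%:E < 2%:E + (2 / rho)%:E * (f (x 0%N) - f xstar) * (eps ^- 2)%:E)%E.
Proof.
move=> fprop _ _ rho0 _ _ _ lb0 _ Hstep delta0 Hsf _ Hlet _ Hxb Hz Hx _ Hstar eps0 Heps.
case: Hlet => _ [beta0 Hbeta].
have bd : beta < delta by have := Hbeta 0%N; rewrite lt_min => /andP[].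
have xd : forall k, cball xbar delta (x k).
  by move=> k; rewrite /cball /=; apply: le_trans (Hxb k) _; exact: ltW.
have desc : forall k, f (x k.+1) \is a fin_num /\
   (f (x k.+1) + (enorm (x k.+1 - x k) ^+ 2 / (2 * lam k))%:E <= f (x k))%E.
  move=> k.
  have [g0 [gl lr]] := Hstep k.
  have gpos : 0 < gam k by lra.
  have lgpos : 0 < lam k - gam k by lra.
  have [[P [Pprox [_ [Pres [_ [Pgrad _]]]]]] [P' [_ [_ [Pres' _]]]]] := Hsf k.
  have [zo zg] := Hz k.
  have zc : cball xbar delta (z k) by rewrite /cball /=; exact: ltW.
  have E := grad_unique (Pgrad _ zc) zg.
  set w := (lam k - gam k)^-1 *: (x k - z k) in zg E.
  have EP : P (z k) = x k.+1.
    rewrite Hx; have : gam k *: ((gam k)^-1 *: (z k - P (z k))) = gam k *: w by rewrite E.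
    rewrite scalerA mulfV ?gt_eqF // scale1r => h.
    by rewrite -scalerA -/w -h opprB addrCA subrr addr0.
  have : prox f (gam k) (z k) (x k.+1) by rewrite Pprox // -EP.
  rewrite Pres // => -[v [Hv Hzv]].
  have vw : v = w.
    apply: (scalerI (a := gam k)); first by rewrite gt_eqF.
    have e1 : x k.+1 = z k - gam k *: w by rewrite Hx -scalerA.
    by apply: (addrI (x k.+1)); rewrite -Hzv {1}e1 subrK.
  have e1 : x k.+1 = z k - gam k *: w by rewrite Hx -scalerA.
  have xres : resolvent f (lam k) (x k) (x k.+1).
    exists v; split => //; rewrite vw e1 -addrA -scaleNr -scalerDl.
    have -> : - gam k + lam k = lam k - gam k by rewrite addrC.
    by rewrite /w scalerA mulfV ?gt_eqF // scale1r addrC subrK.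
  rewrite -Pres' // in xres.
  have [_ Hmin] := xres.
  split; first by case: Hv.
  have := Hmin (x k); rewrite subrr enorm0 expr0n /= mul0r adde0.
  by [].
have Es : f xstar = (fine (f xstar))%:E.
  have le1 : (f xstar <= f (x 1%N))%E.
    by rewrite Hstar; apply: ereal_inf_lbound; exists (x 1%N) => //; exact: Hxb.
  have [fin1 _] := desc 0%N.
  rewrite fineK // fin_numE (fprop.2 (xstar)) /=; apply/negP => /eqP h.
  by move: le1 fin1; rewrite h leye_eq => /eqP ->.
set s := fine (f xstar) in Es.
rewrite Es.
case Ef0 : (f (x 0%N)) => [a| |]; last by have := fprop.2 (x 0%N); rewrite Ef0.
  set c := rho * eps ^+ 2 / 2.
  have finx : forall m, f (x m) = (fine (f (x m)))%:E.
    by case=> [|m]; [rewrite Ef0 | rewrite fineK //; case: (desc m)].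
  have step : forall m, (m <= T)%N -> fine (f (x m.+1)) + c <= fine (f (x m)).
    move=> m mT.
    have [_ H] := desc m.
    move: H; rewrite (finx m.+1) (finx m) -EFinD lee_fin => H.
    apply: le_trans H; rewrite lerD2l.
    have [_ [_ lr]] := Hstep m.
    have [g0 [gl _]] := Hstep m.
    have lp : 0 < lam m by lra.
    have epsN := Heps m mT.
    set N := enorm (x m.+1 - x m) in epsN *.
    have rl : rho * lam m < 1.
      by move: lr; rewrite -(ltr_pM2l rho0) mulfV ?gt_eqF.
    rewrite ler_pdivlMr ?mulr_gt0 //.
    have -> : c * (2 * lam m) = (rho * lam m) * eps ^+ 2 by rewrite /c; field.
    have e2 : 0 < eps ^+ 2 by rewrite exprn_gt0.
    have : eps ^+ 2 < N ^+ 2 by rewrite !expr2; nra.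
    nra.
  have sum : forall m, (m <= T.+1)%N -> fine (f (x m)) + m%:R * c <= a.
    elim=> [|m IH] mT; first by rewrite Ef0 /= mul0r addr0.
    have := step m mT; have := IH (ltnW mT); rewrite -natr1 mulrDl mul1r.
    lra.
  have sle : s <= fine (f (x T.+1)).
    rewrite -lee_fin -Es -finx Hstar; apply: ereal_inf_lbound.
    by exists (x T.+1) => //; exact: Hxb.
  have := sum T.+1 (leqnn _).
  rewrite -EFinB -!EFinM -EFinD lte_fin => hs.
  have cpos : 0 < c by rewrite /c !mulr_gt0 // ?exprn_gt0 // invr_gt0.
  have : T.+1%:R <= 2 / rho * (a - s) * eps ^- 2.
    have -> : 2 / rho * (a - s) * eps ^- 2 = (a - s) * c^-1.
      by rewrite /c; field; rewrite !gt_eqF.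
    rewrite ler_pdivlMr //; lra.
  rewrite -natr1; lra.
rewrite addye // gt0_muley; last by rewrite lte_fin divr_gt0.
rewrite mulyr gtr0_sg ?invr_gt0 ?exprn_gt0 // mul1e addey // ltry.
exact: isT.
Qed.
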